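(* Let $\Lambda$ be a lattice and $\Lambda'\subseteq\Lambda$ a sublattice of finite index. Then $\Lambda'$ is characteristic if and only if the index of $\Lambda'$ in $\Lambda$ is coprime to $p$.
   Context: $K=\mathrm{GF}(p^r)$, $\bar K$ an algebraic closure; a lattice is a free abelian group of finite rank. A sublattice $\Lambda'\subseteq\Lambda$ is characteristic if $\Lambda'=\bigcap_{i=1}^m\ker(\theta_i)$ for some finitely many homomorphisms $\theta_1,\ldots,\theta_m:\Lambda\to\bar K^\times$. *)

(* Defs.v *)
From HB Require Import structures.
From mathcomp Require Import all_boot all_order all_algebra all_field.
Set Implicit Arguments. Unset Strict Implicit. Unset Printing Implicit Defensive.
Import GRing.Theory Num.Theory.
Local Open Scope ring_scope.

(* The lattice Lambda is modelled as Z^n = 'rV[int]_n (every free abelian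
   group of rank n is isomorphic to it). *)
Notation lattice n := 'rV[int]_n.

Definition sublattice n (S : {pred lattice n}) : Prop :=
  (0 \in S) /\ (forall x y, x \in S -> y \in S -> x - y \in S).

(* s is a complete, irredundant list of representatives of Lambda / S;
   hence the index [Lambda : S] is finite and equals size s. *)
Definition coset_transversal n (S : {pred lattice n}) (s : seq (lattice n)) : Prop :=
  (forall x, exists2 y, y \in s & x - y \in S) /\
  (forall i j, (i < size s)%N -> (j < size s)%N ->
      nth 0 s i - nth 0 s j \in S -> i = j).

(* group homomorphism Lambda -> L^x, represented as a map into L
   with nonzero values that is multiplicative. *)
Definition mult_hom n (L : fieldType) (theta : lattice n -> L) : Prop :=
  (forall x, theta x != 0) /\ (forall x y, theta (x + y) = theta x * theta y).

Definition characteristic n (L : fieldType) (S : {pred lattice n}) : Prop :=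
  exists m (theta : 'I_m -> lattice n -> L),
    (forall i, mult_hom (theta i)) /\
    (forall x, x \in S <-> forall i, theta i x = 1).

(* Main.v *)
Require Import Defs.
From HB Require Import structures.
From mathcomp Require Import all_boot all_order all_algebra all_field.
From mathcomp Require Import fingroup perm pgroup cyclic ring.
From Stdlib Require Import Classical ClassicalEpsilon.
Set Implicit Arguments. Unset Strict Implicit. Unset Printing Implicit Defensive.
Import GRing.Theory.
Local Open Scope ring_scope.
Ltac zm := apply/rowP => ?; rewrite !mxE; ring.

Definition subgrp (V : zmodType) (H : V -> Prop) :=
  H 0 /\ (forall x y, H x -> H y -> H (x - y)).

Lemma sgN (V : zmodType) (H : V -> Prop) : subgrp H -> forall x, H x -> H (- x).
Proof. by case=> h0 hB x hx; rewrite -sub0r; apply: hB. Qed.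

Lemma sgD (V : zmodType) (H : V -> Prop) : subgrp H -> forall x y, H x -> H y -> H (x + y).
Proof. by move=> hH x y hx hy; rewrite -(opprK y); apply: hH.2 => //; apply: sgN. Qed.

Lemma sgMn (V : zmodType) (H : V -> Prop) : subgrp H -> forall x k, H x -> H (x *+ k).
Proof. move=> hH x k hx; elim: k => [|k IH]; first by rewrite mulr0n; exact: hH.1.
by rewrite mulrS; apply: sgD. Qed.

Lemma sgMz (V : zmodType) (H : V -> Prop) : subgrp H -> forall x (j : int), H x -> H (x *~ j).
Proof. move=> hH x [k|k] hx /=; first exact: sgMn.
by rewrite NegzE mulrNz; apply: sgN => //; apply: sgMn. Qed.

Lemma sgS n (S : {pred lattice n}) : sublattice S -> subgrp (fun v => v \in S).
Proof. by case=> h0 hB; split. Qed.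

Lemma rep_uniq n (S : {pred lattice n}) s : sublattice S -> coset_transversal S s ->
  forall y i j, (i < size s)%N -> (j < size s)%N ->
  y - nth 0 s i \in S -> y - nth 0 s j \in S -> i = j.
Proof.
move=> hS [_ hs] y i j hi hj hyi hyj; apply: hs => //.
have := hS.2 _ _ hyj hyi. by rewrite opprB addrC addrA subrK.
Qed.

Definition rep n (S : {pred lattice n}) (s : seq (lattice n)) (y : lattice n) : nat :=
  find (fun z => y - z \in S) s.

Lemma repP n (S : {pred lattice n}) s : coset_transversal S s -> forall y,
  (rep S s y < size s)%N /\ y - nth 0 s (rep S s y) \in S.
Proof.
move=> [h1 _] y; have hh : has (fun z => y - z \in S) s.
  by case: (h1 y) => z zs yz; apply/hasP; exists z.
split; first by rewrite /rep -has_find.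
exact: (nth_find 0 hh).
Qed.

Lemma memE (T : Type) (S : {pred T}) a b : a \in S -> a = b -> b \in S.
Proof. by move=> h <-. Qed.

Definition sfun n (S : {pred lattice n}) s (hs : coset_transversal S s) (x : lattice n)
  (i : 'I_(size s)) : 'I_(size s) := Ordinal (proj1 (repP hs (nth 0 s i + x))).

Lemma sfunP n (S : {pred lattice n}) s (hS : sublattice S) (hs : coset_transversal S s) x i
  (k : 'I_(size s)) : (sfun hs x i == k) = (nth 0 s i + x - nth 0 s k \in S).
Proof.
rewrite /sfun; case: (repP hs (nth 0 s i + x)) => lt hin.
apply/eqP/idP => [<- //|hk]; apply: val_inj => /=.
exact: (rep_uniq hS hs lt (ltn_ord k) hin hk).
Qed.

Lemma sfun_inj n (S : {pred lattice n}) s (hS : sublattice S) (hs : coset_transversal S s) x :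
  injective (sfun hs x).
Proof.
move=> i j e; have := eqxx (sfun hs x j); rewrite {1}sfunP //.
have := eqxx (sfun hs x i); rewrite {2}e sfunP // => h1 h2.
apply: val_inj; apply: (hs.2 _ _ (ltn_ord _) (ltn_ord _)).
apply: (memE (hS.2 _ _ h1 h2)); zm.
Qed.

Definition sig n (S : {pred lattice n}) s (hS : sublattice S) (hs : coset_transversal S s)
  (x : lattice n) : {perm 'I_(size s)} := perm (@sfun_inj n S s hS hs x).

Lemma sigP n (S : {pred lattice n}) s (hS : sublattice S) (hs : coset_transversal S s) x i
  (k : 'I_(size s)) : (sig hS hs x i == k) = (nth 0 s i + x - nth 0 s k \in S).
Proof. by rewrite permE sfunP. Qed.

Lemma sigD n (S : {pred lattice n}) s (hS : sublattice S) (hs : coset_transversal S s) x y :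
  sig hS hs (x + y) = (sig hS hs x * sig hS hs y)%g.
Proof.
apply/permP => i; apply/eqP; rewrite permM sigP.
have h1 : nth 0 s i + x - nth 0 s (sig hS hs x i) \in S by rewrite -sigP.
have h2 : nth 0 s (sig hS hs x i) + y - nth 0 s (sig hS hs y (sig hS hs x i)) \in S by rewrite -sigP.
apply: (memE (sgD (sgS hS) h1 h2)); zm.
Qed.

Lemma sig0 n (S : {pred lattice n}) s (hS : sublattice S) (hs : coset_transversal S s) :
  sig hS hs 0 = 1%g.
Proof.
apply/permP => i; apply/eqP; rewrite perm1 sigP.
rewrite (_ : _ - _ = 0); [exact: hS.1 | zm].
Qed.

Lemma size_pos n (S : {pred lattice n}) s (hs : coset_transversal S s) : (0 < size s)%N.
Proof. by case: (repP hs 0) => h _; apply: leq_ltn_trans h. Qed.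

Lemma sig_eq n (S : {pred lattice n}) s (hS : sublattice S) (hs : coset_transversal S s) x y :
  sig hS hs x = sig hS hs y <-> x - y \in S.
Proof.
split => [e | h].
  pose i := Ordinal (size_pos hs).
  have h1 : nth 0 s i + x - nth 0 s (sig hS hs x i) \in S by rewrite -sigP.
  have h2 : nth 0 s i + y - nth 0 s (sig hS hs x i) \in S by rewrite -sigP e.
  apply: (memE (hS.2 _ _ h1 h2)); zm.
apply/permP => i; apply/esym/eqP; rewrite sigP.
have h1 : nth 0 s i + x - nth 0 s (sig hS hs x i) \in S by rewrite -sigP.
apply: (memE (hS.2 _ _ h1 h)); zm.
Qed.

Lemma sigX n (S : {pred lattice n}) s (hS : sublattice S) (hs : coset_transversal S s) x k :
  ((sig hS hs x) ^+ k)%g = sig hS hs (x *+ k).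
Proof.
elim: k => [|k IH]; first by rewrite expg0 mulr0n sig0.
by rewrite expgSr IH mulrSr sigD.
Qed.

Definition sigG n (S : {pred lattice n}) s (hS : sublattice S) (hs : coset_transversal S s) :=
  [set sig hS hs (nth 0 s i) | i : 'I_(size s)].

Lemma sig_in n (S : {pred lattice n}) s (hS : sublattice S) (hs : coset_transversal S s) x :
  sig hS hs x \in sigG hS hs.
Proof.
case: (repP hs x) => lt h; apply/imsetP; exists (Ordinal lt) => //.
by apply/sig_eq.
Qed.

Lemma sigG_group n (S : {pred lattice n}) s (hS : sublattice S) (hs : coset_transversal S s) :
  group_set (sigG hS hs).
Proof.
apply/andP; split; first by rewrite -(sig0 hS hs) sig_in.
apply/subsetP => g /mulsgP [a b /imsetP [i _ ->] /imsetP [j _ ->] ->].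
by rewrite -sigD sig_in.
Qed.

Lemma card_sigG n (S : {pred lattice n}) s (hS : sublattice S) (hs : coset_transversal S s) :
  #|sigG hS hs| = size s.
Proof.
rewrite card_imset ?card_ord // => i j /sig_eq h.
by apply: val_inj; apply: (hs.2 _ _ (ltn_ord _) (ltn_ord _)).
Qed.


Lemma torsion n (S : {pred lattice n}) s (hS : sublattice S) (hs : coset_transversal S s) x :
  x *+ size s \in S.
Proof.
pose G := Group (sigG_group hS hs).
have := expg_cardG (G := G) (sig_in hS hs x).
rewrite /= card_sigG sigX -(sig0 hS hs) => /sig_eq.
by rewrite subr0.
Qed.

Lemma cauchy_lat n (S : {pred lattice n}) s (hS : sublattice S) (hs : coset_transversal S s) p :
  prime p -> (p %| size s)%N -> exists x, x \notin S /\ x *+ p \in S.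
Proof.
move=> pp dp.
pose G := Group (sigG_group hS hs).
have : (p %| #|G|)%N by rewrite /= card_sigG.
case/(Cauchy pp) => g /imsetP [i _ ->] og.
exists (nth 0 s i); split.
  apply/negP => hin.
  have : sig hS hs (nth 0 s i) = sig hS hs 0 by apply/sig_eq; rewrite subr0.
  move=> e; move: og; rewrite e sig0 order1 => p1.
  by move: pp; rewrite -p1.
have := expg_order (sig hS hs (nth 0 s i)); rewrite og sigX -(sig0 hS hs) => /sig_eq.
by rewrite subr0.
Qed.

Lemma hom0 (V : zmodType) (L : fieldType) (th : V -> L) :
  (forall x, th x != 0) -> (forall x y, th (x + y) = th x * th y) -> th 0 = 1.
Proof.
move=> nz hD; have := hD 0 0; rewrite addr0 => e.
by apply: (mulfI (nz 0)); rewrite -e mulr1.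
Qed.

Lemma homMn (V : zmodType) (L : fieldType) (th : V -> L) :
  (forall x, th x != 0) -> (forall x y, th (x + y) = th x * th y) ->
  forall x k, th (x *+ k) = th x ^+ k.
Proof.
move=> nz hD x; elim=> [|k IH]; first by rewrite mulr0n expr0 (hom0 nz hD).
by rewrite mulrS exprS hD IH.
Qed.

Lemma forward n (S : {pred lattice n}) s (hS : sublattice S) (hs : coset_transversal S s)
  (L : fieldType) p : prime p -> p \in [pchar L] -> characteristic L S -> coprime (size s) p.
Proof.
move=> pp pc [m [th [hth hS']]].
rewrite coprime_sym prime_coprime //; apply/negP => dp.
have [x [nx px]] := cauchy_lat hS hs pp dp.
apply/negP: nx; rewrite negbK; apply/hS' => i.
have [nz hD] := hth i.
have := (hS' (x *+ p)).1 px i; rewrite (homMn nz hD) => e.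
have : (th i x - 1) ^+ p = 0.
  have := pFrobenius_autB_comm pc (commr1 (th i x)).
  by rewrite !pFrobenius_autE e expr1n subrr.
by move/eqP; rewrite expf_eq0 subr_eq0 => /andP [_ /eqP].
Qed.


Definition mhom (V : zmodType) (L : fieldType) (H : V -> Prop) (chi : V -> L) :=
  (forall u, H u -> chi u != 0) /\
  (forall u v, H u -> H v -> chi (u + v) = chi u * chi v).

Lemma mhom0 (V : zmodType) (L : fieldType) (H : V -> Prop) (chi : V -> L) :
  subgrp H -> mhom H chi -> chi 0 = 1.
Proof.
move=> hH [nz hD]; have := hD 0 0 hH.1 hH.1; rewrite addr0 => e.
by apply: (mulfI (nz 0 hH.1)); rewrite -e mulr1.
Qed.

Lemma mhomN (V : zmodType) (L : fieldType) (H : V -> Prop) (chi : V -> L) :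
  subgrp H -> mhom H chi -> forall u, H u -> chi (- u) = (chi u)^-1.
Proof.
move=> hH [nz hD] u hu; have hn := sgN hH hu.
have := hD _ _ hu hn; rewrite subrr (mhom0 hH (conj nz hD)) => e.
by apply: (mulfI (nz u hu)); rewrite -e mulfV ?nz.
Qed.

Lemma mhomMn (V : zmodType) (L : fieldType) (H : V -> Prop) (chi : V -> L) :
  subgrp H -> mhom H chi -> forall u k, H u -> chi (u *+ k) = chi u ^+ k.
Proof.
move=> hH [nz hD] u k hu; elim: k => [|k IH].
  by rewrite mulr0n expr0 (mhom0 hH (conj nz hD)).
by rewrite mulrS exprS hD // ?IH //; apply: sgMn.
Qed.

Lemma mhomMz (V : zmodType) (L : fieldType) (H : V -> Prop) (chi : V -> L) :
  subgrp H -> mhom H chi -> forall u (q : int), H u -> chi (u *~ q) = chi u ^ q.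
Proof.
move=> hH hc u [k|k] hu; first exact: (mhomMn hH hc).
rewrite NegzE mulrNz (mhomN hH hc); last exact: sgMn.
by rewrite -invr_expz -pmulrn (mhomMn hH hc).
Qed.

Lemma min_ex (P : nat -> Prop) k : P k -> exists d, P d /\ forall j, (j < d)%N -> ~ P j.
Proof.
elim: k {-2}k (leqnn k) => [|k IH] j hj Pj.
  by exists j; split => // i; rewrite leqn0 in hj; rewrite (eqP hj).
case: (classic (exists i, (i < j)%N /\ P i)) => [[i [ij Pi]] | hn].
  apply: (IH i) => //; rewrite -ltnS; exact: leq_trans ij hj.
exists j; split => // i ij Pi; apply: hn; by exists i.
Qed.

Lemma minA (V : zmodType) (H : V -> Prop) g N0 : subgrp H -> (0 < N0)%N -> H (g *+ N0) ->
  exists d, [/\ (0 < d)%N, H (g *+ d), (forall t : int, H (g *~ t) -> (d%:Z %| t)%Z)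
     & (d %| N0)%N].
Proof.
move=> hH N0p hN.
have [d [[dp hd] hmin]] := min_ex (P := fun k => (0 < k)%N /\ H (g *+ k)) (conj N0p hN).
have dvd : forall t : int, H (g *~ t) -> (d%:Z %| t)%Z.
  move=> t ht; apply/dvdz_mod0P.
  have hr : H (g *~ (t %% d%:Z)%Z).
    have e : (t %% d%:Z)%Z = t - (t %/ d%:Z)%Z * d%:Z.
      by rewrite {2}(divz_eq t d%:Z); ring.
    rewrite e mulrzBr; apply: hH.2 => //.
    by rewrite mulrC mulrzA -pmulrn; apply: sgMz.
  have r0 : 0 <= (t %% d%:Z)%Z by apply: modz_ge0; rewrite eqz_nat -lt0n.
  have rl : (t %% d%:Z)%Z < d%:Z by apply: ltz_pmod; rewrite ltz_nat.
  move: hr r0 rl; case: (t %% d%:Z)%Z => // k hk _; rewrite ltz_nat => kd.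
  case: k hk kd => // k hk kd; exfalso; exact: (hmin k.+1 kd).
exists d; split => //.
by have := dvd N0%:Z; rewrite -pmulrn dvdzE /= => ->.
Qed.


Lemma subBB (V : zmodType) (a b c e : V) : (a - b) - (c - e) = (a - c) - (b - e).
Proof. by rewrite !opprB [e - c]addrC addrACA [- b + e]addrC. Qed.
Lemma addBB (V : zmodType) (a b c e : V) : (a - b) + (c - e) = (a + c) - (b + e).
Proof. by rewrite addrACA opprD. Qed.
Lemma subBl (V : zmodType) (v a b : V) : (v - a) - (v - b) = b - a.
Proof. by rewrite opprB addrC subrKA. Qed.

Definition addZ (V : zmodType) (H : V -> Prop) (g : V) : V -> Prop :=
  fun v => exists j : int, H (v - g *~ j).

Lemma addZ_sub (V : zmodType) (H : V -> Prop) g : subgrp H -> subgrp (addZ H g).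
Proof.
move=> hH; split; first by exists 0; rewrite mulr0z subr0; exact: hH.1.
move=> x y [i hi] [j hj]; exists (i - j).
by rewrite mulrzBr -subBB; apply: hH.2.
Qed.

Lemma addZ_H (V : zmodType) (H : V -> Prop) g u : H u -> addZ H g u.
Proof. by move=> hu; exists 0; rewrite mulr0z subr0. Qed.

Lemma addZ_g (V : zmodType) (H : V -> Prop) g : subgrp H -> addZ H g g.
Proof. by move=> hH; exists 1; rewrite mulr1z subrr; exact: hH.1. Qed.

Lemma ext_cons (V : zmodType) (L : fieldType) (H : V -> Prop) (chi : V -> L) g (d : nat) c :
  subgrp H -> mhom H chi -> (forall t : int, H (g *~ t) -> (d%:Z %| t)%Z) ->
  H (g *+ d) -> c ^+ d = chi (g *+ d) -> c != 0 ->
  forall v j j', H (v - g *~ j) -> H (v - g *~ j') ->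
  chi (v - g *~ j) * c ^ j = chi (v - g *~ j') * c ^ j'.
Proof.
move=> hH hc hdv hgd hcd c0 v j j' h1 h2.
have hw := hH.2 _ _ h1 h2; rewrite subBl -mulrzBr in hw.
have /dvdzP [q eq] := hdv _ hw.
have e1 : v - g *~ j = (v - g *~ j') + g *~ (j' - j).
  by rewrite mulrzBr -(subBl v (g *~ j) (g *~ j')) subrKC.
rewrite e1 hc.2 // -mulrA; congr (_ * _).
rewrite eq [q * _]mulrC mulrzA -pmulrn (mhomMz hH hc) // -hcd.
by rewrite (_ : c ^+ d = c ^ d%:Z) // exprz_exp [d%:Z * _]mulrC -eq -expfzDr // subrK.
Qed.

Definition extf (V : zmodType) (L : fieldType) (H : V -> Prop) (chi : V -> L) g c (v : V) : L :=
  let j := epsilon (inhabits 0) (fun j : int => H (v - g *~ j)) in chi (v - g *~ j) * c ^ j.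

Lemma ext (V : zmodType) (L : fieldType) (H : V -> Prop) (chi : V -> L) g (d : nat) c :
  subgrp H -> mhom H chi -> (forall t : int, H (g *~ t) -> (d%:Z %| t)%Z) ->
  (0 < d)%N -> H (g *+ d) -> c ^+ d = chi (g *+ d) ->
  exists chi', [/\ mhom (addZ H g) chi', (forall u, H u -> chi' u = chi u) & chi' g = c].
Proof.
move=> hH hc hdv dp hgd hcd.
have c0 : c != 0.
  apply/eqP => c0; move: hcd; rewrite c0 expr0n eqn0Ngt dp /= => e.
  by move: (hc.1 _ hgd); rewrite -e eqxx.
have key : forall v j, H (v - g *~ j) -> extf H chi g c v = chi (v - g *~ j) * c ^ j.
  move=> v j hj; rewrite /extf.
  have hJ := epsilon_spec (inhabits 0) (fun j : int => H (v - g *~ j)) (ex_intro _ j hj).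
  exact: (ext_cons hH hc hdv hgd hcd c0 hJ hj).
exists (extf H chi g c); split.
- split.
    move=> u [j hj]; rewrite (key _ _ hj) mulf_neq0 ?expfz_neq0 //; exact: hc.1.
  move=> u v [i hi] [j hj].
  have hij : H ((u + v) - g *~ (i + j)) by rewrite mulrzDr -addBB; apply: sgD.
  rewrite (key _ _ hi) (key _ _ hj) (key _ _ hij) mulrzDr -addBB hc.2 // expfzDr //.
  by rewrite mulrACA.
- by move=> u hu; rewrite (key u 0) ?mulr0z ?subr0 ?expr0z ?mulr1.
- have h0 : H (g - g *~ 1) by rewrite mulr1z subrr; exact: hH.1.
  by rewrite (key _ _ h0) mulr1z subrr (mhom0 hH hc) mul1r expr1z.
Qed.


Lemma root_ex (L : closedFieldType) (a : L) d : (0 < d)%N -> exists c : L, c ^+ d = a.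
Proof.
move=> dp; have [c hc] := @solve_monicpoly L d (fun i => if i == 0%N then a else 0) dp.
exists c; rewrite hc; case: d dp {hc} => // d _.
by rewrite big_ord_recl /= expr0 mulr1 big1 ?addr0 // => i _; rewrite mul0r.
Qed.

Lemma unit_root (L : closedFieldType) d : (1 < d)%N -> d%:R != 0 :> L ->
  exists c : L, c ^+ d = 1 /\ c != 1.
Proof.
case: d => // [[//|e]] _ dn0.
have [c hc] := @solve_monicpoly L e.+1 (fun _ => -1) isT.
have hs : \sum_(i < e.+2) c ^+ i = 0.
  rewrite big_ord_recr /= hc -big_split /= big1 // => i _; by rewrite mulN1r subrr.
exists c; split.
  by apply/eqP; rewrite -subr_eq0 subrX1 hs mulr0.
apply/eqP => c1; move: hs; rewrite c1.
under eq_bigr do rewrite expr1n.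
by rewrite sumr_const card_ord; apply/eqP.
Qed.

Lemma iter_ext (V : zmodType) (L : closedFieldType) (H0 : V -> Prop) N0 :
  (0 < N0)%N -> (forall v, H0 (v *+ N0)) ->
  forall (gs : seq V) (H : V -> Prop) (chi : V -> L), subgrp H -> (forall v, H0 v -> H v) ->
  mhom H chi ->
  exists H' chi', [/\ subgrp H', (forall v, H v -> H' v), (forall g, g \in gs -> H' g),
     mhom H' chi' & forall u, H u -> chi' u = chi u].
Proof.
move=> N0p htor; elim=> [|g gs IH] H chi hH h0 hc.
  by exists H, chi; split.
have [d [dp hgd hdv _]] := @minA V H g N0 hH N0p (h0 _ (htor g)).
have [c hcd] := root_ex (chi (g *+ d)) dp.
have [chi1 [hc1 agr1 _]] := ext hH hc hdv dp hgd hcd.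
have hH1 := @addZ_sub _ H g hH.
have [H' [chi' [hH' sub' gs' hc' agr']]] := IH _ chi1 hH1 (fun v hv => @addZ_H _ H g v (h0 v hv)) hc1.
exists H', chi'; split => //.
- by move=> v hv; apply: sub'; apply: addZ_H.
- move=> x; rewrite inE => /orP [/eqP -> | hx]; last exact: gs'.
  by apply: sub'; apply: addZ_g.
- by move=> u hu; rewrite agr' ?agr1 //; apply: addZ_H.
Qed.


Lemma separate n (S : {pred lattice n}) s (hS : sublattice S) (hs : coset_transversal S s)
  (L : closedFieldType) p (pc : p \in [pchar L]) (cop : coprime (size s) p) x :
  x \notin S -> exists th : lattice n -> L,
    [/\ mult_hom th, (forall v, v \in S -> th v = 1) & th x != 1].
Proof.
move=> nx.
have hSg := sgS hS.
have Np := size_pos hs.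
have hc0 : mhom (fun v => v \in S) (fun _ => 1 : L).
  by split => // *; rewrite ?oner_neq0 ?mulr1.
have [d [dp hgd hdv dN]] := @minA _ (fun v => v \in S) x (size s) hSg Np (torsion hS hs x).
have d1 : (1 < d)%N.
  rewrite ltn_neqAle dp andbT; apply/negP => /eqP d1; move: hgd; rewrite -d1 mulr1n.
  by move/negP: nx.
have dn0 : d%:R != 0 :> L.
  rewrite -(dvdn_pcharf pc); rewrite -prime_coprime ?(pcharf_prime pc) // coprime_sym.
  exact: coprime_dvdl dN cop.
have [c [cd c1]] := unit_root d1 dn0.
have [chi0 [hc0' agr0 chx]] := ext hSg hc0 hdv dp hgd cd.
pose gs := [seq delta_mx 0 j | j <- enum 'I_n] : seq (lattice n).
have hH1 := @addZ_sub _ (fun v => v \in S) x hSg.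
have [H' [chi' [hH' sub' gs' [nz hD] agr']]] :=
  @iter_ext _ L (fun v => v \in S) (size s) Np (torsion hS hs) gs _ chi0 hH1
    (fun v hv => @addZ_H _ (fun v => v \in S) x v hv) hc0'.
have all' : forall v, H' v.
  move=> v; rewrite (row_sum_delta v).
  apply: (big_ind H'); [exact: hH'.1 | by move=> *; apply: sgD | move=> j _].
  rewrite -[v 0 j]intz scaler_int; apply: sgMz => //; apply: gs'.
  by apply/mapP; exists j; rewrite ?mem_enum.
exists chi'; split.
- by split => [u | u v]; [apply: nz | apply: hD].
- move=> v hv; rewrite agr' ?agr0 //; exact: addZ_H.
- by rewrite agr' ?chx //; apply: addZ_g.
Qed.

Lemma backward n (S : {pred lattice n}) s (hS : sublattice S) (hs : coset_transversal S s)
  (L : closedFieldType) p (pc : p \in [pchar L]) (cop : coprime (size s) p) :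
  characteristic L S.
Proof.
have : forall i : 'I_(size s), exists th : lattice n -> L,
    [/\ mult_hom th, (forall v, v \in S -> th v = 1) & nth 0 s i \notin S -> th (nth 0 s i) != 1].
  move=> i; case: (boolP (nth 0 s i \in S)) => hi.
    exists (fun _ => 1); split; [split => [_|_ _]; by rewrite ?oner_neq0 ?mulr1 | by [] | by move=> /negP; case].
  have [th [h1 h2 h3]] := separate hS hs pc cop hi.
  by exists th; split.
case/fin_all_exists => th hth.
exists (size s), th; split; first by move=> i; case: (hth i) => h _ _.
move=> x; split => [hx i | hall]; first by case: (hth i) => _ h _; apply: h.
case: (repP hs x) => lt hk.
set k := Ordinal lt.
have [[nz hD] h1 h3] := hth k.
have hsk : nth 0 s k \in S.
  apply/negPn/negP => nk; move: (h3 nk); apply/negP; rewrite negbK.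
  have hm : - (x - nth 0 s k) \in S by apply: sgN (sgS hS) _ hk.
  rewrite (_ : nth 0 s k = x + - (x - nth 0 s k)); last by rewrite opprB subrKC.
  by rewrite hD hall h1 // mulr1.
by rewrite -(subrK (nth 0 s k) x); apply: sgD (sgS hS) _ _ hk hsk.
Qed.


Unset Implicit Arguments.

(* K = GF(p^r) is any finite field of characteristic p; L with iota : K -> L
   algebraic and L algebraically closed is an algebraic closure of K. *)
Theorem lemma5p9 (K : finFieldType) (p : nat) (hp : p \in [pchar K])
    (L : closedFieldType) (iota : {rmorphism K -> L}) (halg : integralRange iota)
    (n : nat) (S : {pred 'rV[int]_n}) (hS : sublattice S)
    (s : seq 'rV[int]_n) (hs : coset_transversal S s) :
  characteristic L S <-> coprime (size s) p.
Proof.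
have pc : p \in [pchar L] := rmorph_pchar iota hp.
split.
  exact: (forward hS hs (pcharf_prime pc) pc).
exact: (backward hS hs pc).
Qed.
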